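(* Let $G$ be a graph with a linear order $<$ on $V(G)$ satisfying the X-property, let $s<t$ be vertices with $d^*:=\operatorname{dist}(s,t)<\infty$, and let $P=p_0,p_1,\dots,p_{d^*}$ (with $p_0=s$, $p_{d^*}=t$) be a shortest $s$-$t$ path. Then $\operatorname{righti}(P)<\operatorname{lefti}(P)$ holds if and only if $P$ contains a pair of crossing edges. Moreover, if $P$ contains a pair of crossing edges, then $\operatorname{righti}(P)=\operatorname{lefti}(P)-1$ and $p_i<p_j$ for all indices $i<\operatorname{righti}(P)<\operatorname{lefti}(P)<j$.
   Context: The X-property: for all vertices $p<q<r<s$, if $\{p,r\}\in E(G)$ and $\{q,s\}\in E(G)$ then $\{p,s\}\in E(G)$. $\operatorname{dist}$ is the number of edges of a shortest path. $\operatorname{lefti}(P)$ is the index $i$ such that $p_i$ is the leftmost (w.r.t. $<$) vertex of $P$, and $\operatorname{righti}(P)$ the index of the rightmost vertex of $P$. Two edges $\{a,b\}$, $\{c,d\}$ with $a<b$, $c<d$ are crossing if $a<c<b<d$ or $c<a<d<b$. *)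

(* Defs.v *)
From mathcomp Require Import all_boot all_order.
Set Implicit Arguments. Unset Strict Implicit. Unset Printing Implicit Defensive.
Import Order.TTheory.
Local Open Scope order_scope.

Definition simple_graph {T : Type} (e : rel T) :=
  symmetric e /\ irreflexive e.

Definition X_property {d} {T : orderType d} (e : rel T) :=
  forall p q r s : T, p < q -> q < r -> r < s -> e p r -> e q s -> e p s.

(* p = [:: p_0; ...; p_k] is an s-t walk in e (k edges, k = size p - 1). *)
Definition walk {T : eqType} (e : rel T) (s t : T) (p : seq T) :=
  [/\ p != [::], head s p = s, last s p = t &
      forall i, i.+1 < size p -> e (nth s p i) (nth s p i.+1)].

(* p is a shortest s-t path: an s-t walk with a minimum number of edges;
   its number of edges size p - 1 is dist(s,t) (finite since p exists). *)
Definition shortest_path {T : eqType} (e : rel T) (s t : T) (p : seq T) :=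
  walk e s t p /\ forall q, walk e s t q -> size p <= size q.

Definition lefti {d} {T : orderType d} (p : seq T) (x0 : T) : nat :=
  index (foldr Order.min (head x0 p) p) p.
Definition righti {d} {T : orderType d} (p : seq T) (x0 : T) : nat :=
  index (foldr Order.max (head x0 p) p) p.

Definition crossing {d} {T : orderType d} (a b c e : T) :=
  let a' := Order.min a b in let b' := Order.max a b in
  let c' := Order.min c e in let d' := Order.max c e in
  (a' < c' < b') && (b' < d') || (c' < a' < d') && (d' < b').

Definition has_crossing {d} {T : orderType d} (p : seq T) (x0 : T) :=
  exists i j, [/\ i.+1 < size p, j.+1 < size p &
    crossing (nth x0 p i) (nth x0 p i.+1) (nth x0 p j) (nth x0 p j.+1)].

(* Main.v *)
Require Import Defs.
From mathcomp Require Import all_boot all_order zify.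
Import Order.TTheory.
Local Open Scope order_scope.

Ltac clear_ord := repeat match goal with
 | H : ?P |- _ => lazymatch P with context [@Order.lt _ _ ?x _] =>
     let ty := type of x in lazymatch ty with nat => fail | _ => clear H end end
 | H : ?P |- _ => lazymatch P with context [@Order.le _ _ ?x _] =>
     let ty := type of x in lazymatch ty with nat => fail | _ => clear H end end
 | H : ?P |- _ => lazymatch P with context [crossing] => clear H end
 end.
Ltac nlia := clear_ord; lia.

Ltac ord_sat :=
  repeat match goal with
  | H1 : is_true (?a < ?b), H2 : is_true (?b < ?c) |- _ =>
      lazymatch goal with
      | _ : is_true (a < c) |- _ => fail
      | _ => have := lt_trans H1 H2; move=> ?
      end
  | H1 : is_true (?a <= ?b), H2 : is_true (?b < ?c) |- _ =>
      lazymatch goal with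
      | _ : is_true (a < c) |- _ => fail
      | _ => have := le_lt_trans H1 H2; move=> ?
      end
  | H1 : is_true (?a < ?b), H2 : is_true (?b <= ?c) |- _ =>
      lazymatch goal with
      | _ : is_true (a < c) |- _ => fail
      | _ => have := lt_le_trans H1 H2; move=> ?
      end
  end.
Ltac ord := ord_sat; first [assumption | apply: ltW; assumption |
   match goal with H : is_true (?a < ?a) |- _ => by rewrite ltxx in H end].
Ltac ord_contra :=
  ord_sat; match goal with
  | H : is_true (?a < ?a) |- _ => by rewrite ltxx in H
  end.


Lemma ivt_up (P : pred nat) i k : ~~ P i -> P (i + k) ->
  exists a, [/\ (i <= a)%N, (a < i + k)%N, ~~ P a & P a.+1].
Proof.
elim: k => [|k IH] hi hk; first by move: hi; rewrite -[i]addn0 hk.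
case: (boolP (P (i + k))) => h.
- by have [a [? ? ? ?]] := IH hi h; exists a; split => //; nlia.
- by exists (i + k); split => //; [nlia|nlia|rewrite -addnS].
Qed.

Lemma ivt (P : pred nat) i j : ~~ P i -> P j ->
  exists a, [/\ (minn i j <= a)%N, (a < maxn i j)%N & P a != P a.+1].
Proof.
move=> hi hj; case: (leqP i j) => ij.
- have [a [h1 h2 h3 h4]] := @ivt_up P i (j - i) hi ltac:(by rewrite subnKC).
  by exists a; split; [nlia|nlia|rewrite h4 (negbTE h3)].
- have [a [h1 h2 h3 h4]] := @ivt_up (fun x => ~~ P x) j (i - j) ltac:(by rewrite negbK)
    ltac:(by rewrite subnKC //; nlia).
  by exists a; split; [nlia|nlia|rewrite (negbTE h4) (negbNE h3)].
Qed.


Section L.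
Variables (d : Order.disp_t) (T : orderType d) (e : rel T) (s t : T) (p : seq T).
Hypothesis Hsg : simple_graph e.
Hypothesis HX : X_property e.
Hypothesis Hst : s < t.
Hypothesis Hsp : shortest_path e s t p.
Local Notation n := (size p).
Local Notation f i := (nth s p i).

Lemma f0 : f 0 = s.
Proof. by case: Hsp => -[_ h _ _] _; rewrite nth0. Qed.
Lemma flast : f n.-1 = t.
Proof. by case: Hsp => -[_ _ h _] _; rewrite nth_last. Qed.
Lemma fedge i : (i.+1 < n)%N -> e (f i) (f i.+1).
Proof. by case: Hsp => -[_ _ _ h] _; apply: h. Qed.
Lemma n2 : (1 < n)%N.
Proof.
case: Hsp => -[h _ _ _] _. case E: n => [|[|k]] //.
- by move: h; rewrite -size_eq0 E.
- have := flast; rewrite E /= f0 => h1. by move: Hst; rewrite h1 ltxx.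
Qed.

Lemma shortcut a b : (a < n)%N -> (a < b)%N -> (b <= n)%N ->
  ((b < n)%N -> e (f a) (f b)) -> (b = n -> f a = t) -> (n <= a.+1 + (n - b))%N.
Proof.
move=> an ab bn hab hbt.
set q := take a.+1 p ++ drop b p.
have sq : size q = (a.+1 + (n - b))%N by rewrite size_cat size_takel ?size_drop.
  
have nq : forall i, nth s q i = if (i < a.+1)%N then f i else f (b + (i - a.+1)).
  move=> i; rewrite nth_cat size_takel //; case: ifP => h; first by rewrite nth_take.
  by rewrite nth_drop.
have wq : walk e s t q.
  split.
  - by rewrite -size_eq0 sq.
  - by rewrite -nth0 nq /= f0.
  - rewrite -nth_last sq nq. case: ifP => h.
    + have bn' : b = n by nlia. by rewrite -hbt //; congr nth; nlia.
    + rewrite -flast; congr nth; nlia.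
  - move=> i; rewrite sq => hi; rewrite !nq.
    case: (ltngtP i a) => h.
    + have -> : (i < a.+1)%N = true by nlia. have -> : (i.+1 < a.+1)%N = true by nlia.
      apply: fedge; nlia.
    + have -> : (i < a.+1)%N = false by nlia. have -> : (i.+1 < a.+1)%N = false by nlia.
      have -> : (b + (i.+1 - a.+1))%N = (b + (i - a.+1)).+1 by nlia.
      apply: fedge; nlia.
    + subst i. rewrite ltnSn ltnn subnn addn0. apply: hab; nlia.
case: Hsp => _ h; rewrite -sq; exact: h.
Qed.

Lemma uniqF i j : (i < n)%N -> (j < n)%N -> f i = f j -> i = j.
Proof.
wlog: i j / (i <= j)%N => [W|].
  move=> hi hj h; case: (leqP i j) => ij; first exact: W.
  by symmetry; apply: W => //; nlia.
move=> ij hi hj h; case: (eqVneq i j) => // ne; have {}ij : (i < j)%N by nlia.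
exfalso.
have [hjn|hjn] : (j.+1 < n)%N \/ j.+1 = n by nlia.
- have H1 : (j.+1 < n)%N -> e (f i) (f j.+1) by move=> _; rewrite h; apply: fedge.
  have := @shortcut i j.+1 hi ltac:(nlia) ltac:(nlia) H1 ltac:(nlia); nlia.
- have H1 : (n < n)%N -> e (f i) (f n) by rewrite ltnn.
  have H2 : n = n -> f i = t by move=> _; rewrite h -flast; congr nth; nlia.
  have := @shortcut i n hi ltac:(nlia) (leqnn _) H1 H2; nlia.
Qed.

Lemma fneq i j : (i < n)%N -> (j < n)%N -> i <> j -> f i != f j.
Proof. by move=> hi hj ij; apply/eqP => /uniqF; auto. Qed.

Lemma flt i j : (i < n)%N -> (j < n)%N -> i <> j -> (f i < f j) || (f j < f i).
Proof. by move=> hi hj ij; apply: lt_total; apply: fneq. Qed.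

Lemma fle_lt i j : (i < n)%N -> (j < n)%N -> i <> j -> f i <= f j -> f i < f j.
Proof. by move=> hi hj ij; rewrite lt_neqAle fneq. Qed.

Lemma chord i j : (i.+1 < j)%N -> (j < n)%N -> ~~ e (f i) (f j).
Proof.
move=> ij jn; apply/negP => h.
have := @shortcut i j ltac:(nlia) ltac:(nlia) ltac:(nlia) (fun _ => h) ltac:(nlia); nlia.
Qed.

Lemma adj a b : (a < n)%N -> (b < n)%N -> e (f a) (f b) -> a = b.+1 \/ b = a.+1.
Proof.
move=> an bn h; case: (ltngtP a b) => ab.
- case: (ltngtP a.+1 b) => ab'; [|nlia|by right].
  by move: (chord _ _ ab' bn); rewrite h.
- case: (ltngtP b.+1 a) => ab'; [|nlia|by left].
  by move: (chord _ _ ab' an); case: Hsg => sy _; rewrite sy h.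
- by subst; case: Hsg => _ ir; move: h; rewrite ir.
Qed.

Definition pat k := ((f k.+1 < f k.+3) && (f k.+3 < f k) && (f k < f k.+2)) ||
                    ((f k.+2 < f k) && (f k < f k.+3) && (f k.+3 < f k.+1)).

Lemma Hcore u v w x : (u < n)%N -> (v < n)%N -> (w < n)%N -> (x < n)%N ->
  (v = u.+1 \/ u = v.+1) -> (x = w.+1 \/ w = x.+1) ->
  f u < f w -> f w < f v -> f v < f x ->
  exists k, [/\ (k.+3 < n)%N,
    (u = k.+1 /\ x = k.+2 /\ v = k /\ w = k.+3) \/
    (x = k.+1 /\ u = k.+2 /\ w = k /\ v = k.+3) & pat k].
Proof.
move=> un vn wn xn huv hwx h1 h2 h3.
have ne : forall i j, f i < f j -> i <> j by move=> i j hij ij; subst; rewrite ltxx in hij.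
have uw := ne _ _ h1; have wv := ne _ _ h2; have vx := ne _ _ h3.
have ux : u <> x by apply: ne; ord_sat; done.
have uv : u <> v by apply: ne; ord_sat; done.
have wx : w <> x by apply: ne; ord_sat; done.
have eux : e (f u) (f x).
  apply: (HX _ _ _ _ h1 h2 h3).
  - by case: huv => E; rewrite E; [apply: fedge; nlia|case: Hsg => sy _; rewrite sy; apply: fedge; nlia].
  - by case: hwx => E; rewrite E; [apply: fedge; nlia|case: Hsg => sy _; rewrite sy; apply: fedge; nlia].
case: (adj _ _ un xn eux) => hux.
- exists w; have I : x = w.+1 /\ u = w.+2 /\ v = w.+3 by nlia.
  case: I => ? [? ?]; subst; split; [nlia|right; nlia|].
  by rewrite /pat h1 h2 h3 /= orbT.
- exists v; have I : u = v.+1 /\ x = v.+2 /\ w = v.+3 by nlia.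
  case: I => ? [? ?]; subst; split; [nlia|left; nlia|].
  by rewrite /pat h1 h2 h3.
Qed.

Lemma minE' (a b : T) : Order.min a b = if a < b then a else b. Proof. by []. Qed.
Lemma maxE' (a b : T) : Order.max a b = if a < b then b else a. Proof. by []. Qed.

Lemma crossing_unf (a b c x : T) :
  crossing a b c x ->
  exists a' b' c' x', [/\ (a' = a /\ b' = b \/ a' = b /\ b' = a),
     (c' = c /\ x' = x \/ c' = x /\ x' = c) &
     (a' < c' < b') && (b' < x') || (c' < a' < x') && (x' < b')].
Proof.
rewrite /crossing; cbv zeta; rewrite !minE' !maxE'.
case: (boolP (a < b)) => ab; case: (boolP (c < x)) => cx; move=> /= h.
- by exists a, b, c, x; split; auto.
- by exists a, b, x, c; split; auto.
- by exists b, a, c, x; split; auto.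
- by exists b, a, x, c; split; auto.
Qed.

Lemma L1 i j : (i.+1 < n)%N -> (j.+1 < n)%N ->
  crossing (f i) (f i.+1) (f j) (f j.+1) ->
  exists k, [/\ (k.+3 < n)%N, (i = k /\ j = k.+2) \/ (i = k.+2 /\ j = k) & pat k].
Proof.
move=> hi hj /crossing_unf [a' [b' [c' [x' [ha hc h]]]]].
have [ia [ib [Ha [Hb Hab]]]] : exists ia ib, [/\ f ia = a', f ib = b' &
    (ia = i /\ ib = i.+1 \/ ia = i.+1 /\ ib = i)].
  by case: ha => -[-> ->]; [exists i, i.+1|exists i.+1, i]; split; auto.
have [ic [ix [Hc [Hx Hcx]]]] : exists ic ix, [/\ f ic = c', f ix = x' &
    (ic = j /\ ix = j.+1 \/ ic = j.+1 /\ ix = j)].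
  by case: hc => -[-> ->]; [exists j, j.+1|exists j.+1, j]; split; auto.
subst a' b' c' x'.
case/orP: h => /andP [/andP [h1 h2] h3].
- have [k [kn I P]] := @Hcore ia ib ic ix ltac:(nlia) ltac:(nlia) ltac:(nlia) ltac:(nlia)
     ltac:(nlia) ltac:(nlia) h1 h2 h3.
  exists k; split => //; nlia.
- have [k [kn I P]] := @Hcore ic ix ia ib ltac:(nlia) ltac:(nlia) ltac:(nlia) ltac:(nlia)
     ltac:(nlia) ltac:(nlia) h1 h2 h3.
  exists k; split => //; nlia.
Qed.

Lemma cross_sw1 (a b c x : T) : crossing a b c x = crossing b a c x.
Proof. by rewrite /crossing; cbv zeta; rewrite !minE' !maxE'; case: (ltgtP a b) => // ->. Qed.
Lemma cross_sw2 (a b c x : T) : crossing a b c x = crossing a b x c.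
Proof. by rewrite /crossing; cbv zeta; rewrite !minE' !maxE'; case: (ltgtP c x) => // ->. Qed.
Lemma cross_sw3 (a b c x : T) : crossing a b c x = crossing c x a b.
Proof. by rewrite /crossing; cbv zeta; rewrite orbC. Qed.

Lemma cross_base1 (a b c x : T) : a < c -> c < b -> b < x -> crossing a b c x.
Proof.
move=> h1 h2 h3; have h4 : a < b by ord_sat. have h5 : c < x by ord_sat.
by rewrite /crossing; cbv zeta; rewrite !minE' !maxE' h4 h5 h1 h2 h3.
Qed.
Lemma cross_base2 (a b c x : T) : x < a -> a < c -> c < b -> crossing a b x c.
Proof.
move=> h1 h2 h3; have h4 : a < b by ord_sat. have h5 : x < c by ord_sat.
by rewrite /crossing; cbv zeta; rewrite !minE' !maxE' h4 h5 h1 h2 h3 orbT.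
Qed.

Lemma cross_mk (a b c x al be ga de : T) :
  (a = al /\ b = be \/ a = be /\ b = al) -> (c = ga /\ x = de \/ c = de /\ x = ga) ->
  al < ga -> ga < be -> (de < al \/ be < de) -> crossing a b c x.
Proof.
move=> hab hcx h1 h2 h3.
have H : crossing al be ga de.
  case: h3 => h3; last exact: cross_base1.
  by rewrite cross_sw2; apply: cross_base2.
case: hab => -[-> ->]; case: hcx => -[-> ->] //.
- by rewrite cross_sw2.
- by rewrite cross_sw1.
- by rewrite cross_sw1 cross_sw2.
Qed.

Lemma J a1 a2 b1 b2 jc i1 i2 jw :
 (a2 < n)%N -> (b2 < n)%N -> (a2 < b1 \/ b2 < a1)%N ->
 (a1 <= i1 <= a2)%N -> (a1 <= i2 <= a2)%N -> (b1 <= jc <= b2)%N -> (b1 <= jw <= b2)%N ->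
 f i1 < f jc -> f jc < f i2 ->
 (forall l, (a1 <= l <= a2)%N -> f jw < f l) \/ (forall l, (a1 <= l <= a2)%N -> f l < f jw) ->
 exists a b, [/\ (a1 <= a < a2)%N, (b1 <= b < b2)%N & crossing (f a) (f a.+1) (f b) (f b.+1)].
Proof.
move=> a2n b2n disj hi1 hi2 hjc hjw h1 h2 hw.
have [a [am aM hP]] := @ivt (fun l => f jc < f l) i1 i2 ltac:(by rewrite /= ltNge (ltW h1)) h2.
have [ia [ib [hia hib Hab lt1 lt2]]] : exists ia ib, [/\ (a1 <= ia <= a2)%N, (a1 <= ib <= a2)%N,
    (ia = a /\ ib = a.+1 \/ ia = a.+1 /\ ib = a), f ia < f jc & f jc < f ib].
  case: (boolP (f jc < f a)) hP => Pa /=.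
  - move=> hne; have Pa1 : ~~ (f jc < f a.+1) by move: hne; case: (f jc < f a.+1).
    exists a.+1, a; split => //; [nlia|nlia|by right|].
    by apply: fle_lt; [nlia|nlia|nlia|rewrite leNgt].
  - move=> hne; have Pa1 : (f jc < f a.+1) by move: hne; case: (f jc < f a.+1).
    exists a, a.+1; split => //; [nlia|nlia|by left|].
    by apply: fle_lt; [nlia|nlia|nlia|rewrite leNgt].
have Qjw : ~~ ((f ia < f jw) && (f jw < f ib)).
  case: hw => hw.
  - by rewrite (ltNge (f ia)) (ltW (hw _ hia)).
  - by rewrite (ltNge (f jw)) (ltW (hw _ hib)) andbF.
have [b [bm bM hQ]] := @ivt (fun l => ~~ ((f ia < f l) && (f l < f ib))) jc jw
  ltac:(by rewrite negbK lt1 lt2) Qjw.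
have [jz [jo [hjz hjo Hzo /andP [z1 z2] o]]] : exists jz jo, [/\ (b1 <= jz <= b2)%N, (b1 <= jo <= b2)%N,
    (jz = b /\ jo = b.+1 \/ jz = b.+1 /\ jo = b), (f ia < f jz) && (f jz < f ib) &
    (f jo < f ia \/ f ib < f jo)].
  have out : forall l, (b1 <= l <= b2)%N -> ~~ ((f ia < f l) && (f l < f ib)) ->
      f l < f ia \/ f ib < f l.
    move=> l hl; rewrite negb_and => /orP [] hh; rewrite -leNgt in hh.
    - by left; apply: fle_lt => //; nlia.
    - by right; apply: fle_lt => //; nlia.
  case: (boolP ((f ia < f b) && (f b < f ib))) hQ => /= Pb.
  - move=> hne; have Pb1 : ~~ ((f ia < f b.+1) && (f b.+1 < f ib)) by move: hne; case: ((f ia < f b.+1) && (f b.+1 < f ib)).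
    exists b, b.+1; split => //; [nlia|nlia|by left|]. apply: out => //; nlia.
  - move=> hne; have ? : ((f ia < f b.+1) && (f b.+1 < f ib)) by move: hne; case: ((f ia < f b.+1) && (f b.+1 < f ib)).
    exists b.+1, b; split => //; [nlia|nlia|by right|]. apply: out => //; nlia.
exists a, b; split; [nlia|nlia|].
apply: (@cross_mk _ _ _ _ (f ia) (f ib) (f jz) (f jo)) => //.
- by case: Hab => -[-> ->]; [left|right].
- by case: Hzo => -[-> ->]; [left|right].
Qed.

Lemma ex_max i j : (i <= j)%N ->
  exists m, (i <= m <= j)%N /\ forall l, (i <= l <= j)%N -> f l <= f m.
Proof.
elim: j => [|j IH] ij.
  by exists 0; split; [nlia|move=> l hl; have -> : l = 0 by nlia].
case: (ltngtP i j.+1) => h; last first.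
- by exists j.+1; split; [nlia|move=> l hl; have -> : l = j.+1 by nlia].
- nlia.
have [m [hm H]] := IH ltac:(nlia).
case: (boolP (f m <= f j.+1)) => c.
- exists j.+1; split; [nlia|move=> l hl].
  case: (ltngtP l j.+1) => hl'; [|nlia|by rewrite hl'].
  exact: le_trans (H l ltac:(nlia)) c.
- rewrite -ltNge in c. exists m; split; [nlia|move=> l hl].
  case: (ltngtP l j.+1) => hl'; [apply: H; nlia|nlia|by rewrite hl'; apply: ltW].
Qed.

Lemma ex_min i j : (i <= j)%N ->
  exists m, (i <= m <= j)%N /\ forall l, (i <= l <= j)%N -> f m <= f l.
Proof.
elim: j => [|j IH] ij.
  by exists 0; split; [nlia|move=> l hl; have -> : l = 0 by nlia].
case: (ltngtP i j.+1) => h; last first.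
- by exists j.+1; split; [nlia|move=> l hl; have -> : l = j.+1 by nlia].
- nlia.
have [m [hm H]] := IH ltac:(nlia).
case: (boolP (f j.+1 <= f m)) => c.
- exists j.+1; split; [nlia|move=> l hl].
  case: (ltngtP l j.+1) => hl'; [|nlia|by rewrite hl'].
  exact: le_trans c (H l ltac:(nlia)).
- rewrite -ltNge in c. exists m; split; [nlia|move=> l hl].
  case: (ltngtP l j.+1) => hl'; [apply: H; nlia|nlia|by rewrite hl'; apply: ltW].
Qed.

Lemma uniq_p : uniq p.
Proof. apply/(uniqP s) => i j hi hj; apply: uniqF; [exact: hi|exact: hj]. Qed.

Lemma foldr_max (x0 : T) (l : seq T) :
  (foldr Order.max x0 l = x0 \/ foldr Order.max x0 l \in l) /\
  (forall y, y \in l -> y <= foldr Order.max x0 l).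
Proof.
elim: l => [|a l [IH1 IH2]] /=; first by split; [left|].
rewrite maxE'; case: (boolP (a < foldr Order.max x0 l)) => h /=; split.
- by case: IH1 => [->|hin]; [left|right; rewrite inE hin orbT].
- by move=> y; rewrite inE => /orP [/eqP ->|/IH2]; [apply: ltW|].
- by right; rewrite inE eqxx.
- move=> y; rewrite inE => /orP [/eqP ->|/IH2 hy]; first by [].
  by rewrite -leNgt in h; apply: le_trans hy h.
Qed.

Lemma foldr_min (x0 : T) (l : seq T) :
  (foldr Order.min x0 l = x0 \/ foldr Order.min x0 l \in l) /\
  (forall y, y \in l -> foldr Order.min x0 l <= y).
Proof.
elim: l => [|a l [IH1 IH2]] /=; first by split; [left|].
rewrite minE'; case: (boolP (a < foldr Order.min x0 l)) => h /=; split.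
- by right; rewrite inE eqxx.
- move=> y; rewrite inE => /orP [/eqP ->|/IH2 hy]; first by [].
  by apply: le_trans (ltW h) hy.
- by case: IH1 => [->|hin]; [left|right; rewrite inE hin orbT].
- move=> y; rewrite inE => /orP [/eqP ->|/IH2 //].
  by rewrite -leNgt in h.
Qed.

Lemma head_in : head s p \in p.
Proof. by rewrite -nth0 mem_nth //; apply: ltnW n2. Qed.

Lemma righti_spec : (righti p s < n)%N /\ forall i, (i < n)%N -> f i <= f (righti p s).
Proof.
rewrite /righti; have [H1 H2] := foldr_max (head s p) p.
have hin : foldr Order.max (head s p) p \in p by case: H1 => [->|]; [exact: head_in|].
split; first by rewrite index_mem.
by move=> i hi; rewrite nth_index //; apply: H2; rewrite mem_nth.
Qed.

Lemma lefti_spec : (lefti p s < n)%N /\ forall i, (i < n)%N -> f (lefti p s) <= f i.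
Proof.
rewrite /lefti; have [H1 H2] := foldr_min (head s p) p.
have hin : foldr Order.min (head s p) p \in p by case: H1 => [->|]; [exact: head_in|].
split; first by rewrite index_mem.
by move=> i hi; rewrite nth_index //; apply: H2; rewrite mem_nth.
Qed.

Lemma righti_eq k : (k < n)%N -> (forall i, (i < n)%N -> f i <= f k) -> righti p s = k.
Proof.
move=> kn H; have [r1 r2] := righti_spec.
have E : f (righti p s) = f k by apply: le_anti; rewrite H // r2.
exact: uniqF E.
Qed.

Lemma lefti_eq k : (k < n)%N -> (forall i, (i < n)%N -> f k <= f i) -> lefti p s = k.
Proof.
move=> kn H; have [r1 r2] := lefti_spec.
have E : f (lefti p s) = f k by apply: le_anti; rewrite H // r2.
exact: uniqF E.
Qed.

Lemma S k lo hi : (k.+3 < n)%N -> (lo = k.+1 /\ hi = k.+2 \/ lo = k.+2 /\ hi = k.+1) ->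
  f lo < f k -> f k < f hi -> f lo < f k.+3 -> f k.+3 < f hi ->
  forall l, (l < n)%N -> f lo <= f l /\ f l <= f hi.
Proof.
move=> kn hlh h1 h2 h3 h4.
have key : forall l, (l < n)%N -> (f l < f lo) || (f hi < f l) -> False.
  move=> l ln hl.
  have hw : (forall m, (k.+1 <= m <= k.+2)%N -> f l < f m) \/
            (forall m, (k.+1 <= m <= k.+2)%N -> f m < f l).
    case/orP: hl => hl; [left|right] => m hm; have : m = lo \/ m = hi by nlia.
    - by case => ->; ord.
    - by case => ->; ord.
  case: (ltnP l k) => [lk|kl]; [|case: (ltnP k.+3 l) => [kl3|lk3]].
  - have [a [b [ha hb hc]]] := @J k.+1 k.+2 l k k lo hi l ltac:(nlia) ltac:(nlia) ltac:(nlia)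
      ltac:(nlia) ltac:(nlia) ltac:(nlia) ltac:(nlia) h1 h2 hw.
    have [k' [k'n I P]] := L1 a b ltac:(nlia) ltac:(nlia) hc.
    have E : k = k'.+1 by nlia.
    subst k; rewrite /pat in P.
    by case/orP: P => /andP [/andP [? ?] ?]; case: hlh => -[? ?]; subst lo hi; ord_contra.
  - have [a [b [ha hb hc]]] := @J k.+1 k.+2 k.+3 l k.+3 lo hi l ltac:(nlia) ltac:(nlia) ltac:(nlia)
      ltac:(nlia) ltac:(nlia) ltac:(nlia) ltac:(nlia) h3 h4 hw.
    have [k' [k'n I P]] := L1 a b ltac:(nlia) ltac:(nlia) hc.
    have E : k' = k.+1 by nlia.
    subst k'; rewrite /pat in P.
    by case/orP: P => /andP [/andP [? ?] ?]; case: hlh => -[? ?]; subst lo hi; ord_contra.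
  - have : l = k \/ l = k.+1 \/ l = k.+2 \/ l = k.+3 by nlia.
    by case/orP: hl => hl; case => [|[|[|]]] ?; subst l; case: hlh => -[? ?]; subst lo hi; ord_contra.
move=> l ln; rewrite !leNgt; split; apply/negP => hl; apply: (key l ln); by rewrite hl ?orbT.
Qed.

Lemma far a b : (a.+1 < n)%N -> (b.+1 < n)%N -> (a.+2 < b \/ b.+2 < a)%N ->
  crossing (f a) (f a.+1) (f b) (f b.+1) -> False.
Proof. move=> ha hb hab hc; have [k' [_ I _]] := L1 a b ha hb hc; nlia. Qed.

Lemma C1 k : (k.+3 < n)%N -> f k.+1 < f k.+3 -> f k.+3 < f k -> f k < f k.+2 -> False.
Proof.
move=> kn h1 h2 h3.
have [b1 [hb1 Hb1]] := ex_max 0 k (leq0n k).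
have [a1 [ha1 Ha1]] := ex_min 0 k (leq0n k).
have [b2 [hb2 Hb2]] := ex_max k.+3 n.-1 ltac:(nlia).
have [a2 [ha2 Ha2]] := ex_min k.+3 n.-1 ltac:(nlia).
case: (boolP (f b1 < f b2)) => c1.
  have hw : (forall l, (0 <= l <= k.+1)%N -> f b2 < f l) \/
            (forall l, (0 <= l <= k.+1)%N -> f l < f b2).
    right => l hl; case: (ltnP k l) => hlk.
    - have -> : l = k.+1 by nlia. have := Hb2 k.+3 ltac:(nlia). by move=> ?; ord.
    - have := Hb1 l ltac:(nlia). by move=> ?; ord.
  have [a [b [ha hb hc]]] := @J 0 k.+1 k.+3 n.-1 k.+3 k.+1 k b2 ltac:(nlia) ltac:(nlia)
    ltac:(nlia) ltac:(nlia) ltac:(nlia) ltac:(nlia) ltac:(nlia) h1 h2 hw.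
  by apply: (far a b) hc; nlia.
rewrite -leNgt in c1.
case: (boolP (f a1 < f a2)) => c2.
  have hw : (forall l, (k.+2 <= l <= n.-1)%N -> f a1 < f l) \/
            (forall l, (k.+2 <= l <= n.-1)%N -> f l < f a1).
    left => l hl; case: (ltnP k.+2 l) => hlk.
    - have := Ha2 l ltac:(nlia). by move=> ?; ord.
    - have -> : l = k.+2 by nlia. have := Ha1 k ltac:(nlia). by move=> ?; ord.
  have [a [b [ha hb hc]]] := @J k.+2 n.-1 0 k k k.+3 k.+2 a1 ltac:(nlia) ltac:(nlia)
    ltac:(nlia) ltac:(nlia) ltac:(nlia) ltac:(nlia) ltac:(nlia) h2 h3 hw.
  by apply: (far a b) hc; nlia.
rewrite -leNgt in c2.
have hw : (forall l, (0 <= l <= k)%N -> f a2 < f l) \/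
          (forall l, (0 <= l <= k)%N -> f l < f a2).
  left => l hl; apply: fle_lt; [nlia|nlia|nlia|].
  exact: le_trans c2 (Ha1 l hl).
have g1 : f 0 < f n.-1 by rewrite f0 flast.
have g2 : f n.-1 < f b1.
  apply: fle_lt; [nlia|nlia|nlia|].
  exact: le_trans (Hb2 n.-1 ltac:(nlia)) c1.
have [a [b [ha hb hc]]] := @J 0 k k.+3 n.-1 n.-1 0 b1 a2 ltac:(nlia) ltac:(nlia)
  ltac:(nlia) ltac:(nlia) ltac:(nlia) ltac:(nlia) ltac:(nlia) g1 g2 hw.
by apply: (far a b) hc; nlia.
Qed.

Lemma C2 k i j : (i <= k)%N -> (k.+3 <= j)%N -> (j < n)%N ->
  f k.+2 < f k -> f k < f k.+3 -> f k.+3 < f k.+1 -> f j < f i -> False.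
Proof.
move=> ik kj jn h1 h2 h3 hji.
have [b1 [hb1 Hb1]] := ex_max i k ik.
have [a1 [ha1 Ha1]] := ex_min i k ik.
have [b2 [hb2 Hb2]] := ex_max k.+3 j kj.
have [a2 [ha2 Ha2]] := ex_min k.+3 j kj.
case: (boolP (f b2 < f b1)) => c1.
  have hw : (forall l, (k.+2 <= l <= j)%N -> f b1 < f l) \/
            (forall l, (k.+2 <= l <= j)%N -> f l < f b1).
    right => l hl; case: (ltnP k.+2 l) => hlk.
    - have := Hb2 l ltac:(nlia). by move=> ?; ord.
    - have -> : l = k.+2 by nlia. have := Hb1 k ltac:(nlia). by move=> ?; ord.
  have [a [b [ha hb hc]]] := @J k.+2 j i k k k.+2 k.+3 b1 ltac:(nlia) ltac:(nlia)
    ltac:(nlia) ltac:(nlia) ltac:(nlia) ltac:(nlia) ltac:(nlia) h1 h2 hw.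
  by apply: (far a b) hc; nlia.
rewrite -leNgt in c1.
case: (boolP (f a2 < f a1)) => c2.
  have hw : (forall l, (i <= l <= k.+1)%N -> f a2 < f l) \/
            (forall l, (i <= l <= k.+1)%N -> f l < f a2).
    left => l hl; case: (ltnP k l) => hlk.
    - have -> : l = k.+1 by nlia. have := Ha2 k.+3 ltac:(nlia). by move=> ?; ord.
    - have := Ha1 l ltac:(nlia). by move=> ?; ord.
  have [a [b [ha hb hc]]] := @J i k.+1 k.+3 j k.+3 k k.+1 a2 ltac:(nlia) ltac:(nlia)
    ltac:(nlia) ltac:(nlia) ltac:(nlia) ltac:(nlia) ltac:(nlia) h2 h3 hw.
  by apply: (far a b) hc; nlia.
rewrite -leNgt in c2.
have hw : (forall l, (i <= l <= k)%N -> f b2 < f l) \/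
          (forall l, (i <= l <= k)%N -> f l < f b2).
  right => l hl; apply: fle_lt; [nlia|nlia|nlia|].
  exact: le_trans (Hb1 l hl) c1.
have g1 : f a1 < f j.
  apply: fle_lt; [nlia|nlia|nlia|].
  exact: le_trans c2 (Ha2 j ltac:(nlia)).
have [a [b [ha hb hc]]] := @J i k k.+3 j j a1 i b2 ltac:(nlia) ltac:(nlia)
  ltac:(nlia) ltac:(nlia) ltac:(nlia) ltac:(nlia) ltac:(nlia) g1 hji hw.
by apply: (far a b) hc; nlia.
Qed.

Lemma cross_struct : has_crossing p s -> exists k, [/\ (k.+3 < n)%N, righti p s = k.+1,
  lefti p s = k.+2 & (f k.+2 < f k) && (f k < f k.+3) && (f k.+3 < f k.+1)].
Proof.
case=> i [j [hi hj hc]].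
have [k [kn _ P]] := L1 i j hi hj hc.
case/orP: P => /andP [/andP [a b] c]; first by exfalso; exact: (C1 k kn a b c).
have H := S k k.+2 k.+1 kn (or_intror (conj erefl erefl)) a (lt_trans b c) (lt_trans a b) c.
exists k; split => //.
- by apply: righti_eq; [nlia| move=> l hl; case: (H l hl)].
- by apply: lefti_eq; [nlia| move=> l hl; case: (H l hl)].
- by rewrite a b c.
Qed.

Lemma main : ((righti p s < lefti p s)%N <-> has_crossing p s) /\
  (has_crossing p s ->
     righti p s = (lefti p s).-1 /\
     forall i j, (i < righti p s)%N -> (lefti p s < j)%N -> (j < size p)%N ->
       nth s p i < nth s p j).
Proof.
split; [split|].
- move=> hlt. have [r1 r2] := righti_spec; have [l1 l2] := lefti_spec.
  move: hlt r1 r2 l1 l2; set M := righti p s; set m := lefti p s => hlt r1 r2 l1 l2.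
  have hw : (forall l, (m <= l <= n.-1)%N -> f M < f l) \/
            (forall l, (m <= l <= n.-1)%N -> f l < f M).
    right => l hl; apply: fle_lt; [nlia|nlia|nlia|]. apply: r2; nlia.
  have g1 : f m < f 0 by apply: fle_lt; [nlia|nlia|nlia|]; apply: l2; nlia.
  have g2 : f 0 < f n.-1 by rewrite f0 flast.
  have [a [b [ha hb hc]]] := @J m n.-1 0 M 0 m n.-1 M ltac:(nlia) ltac:(nlia)
    ltac:(nlia) ltac:(nlia) ltac:(nlia) ltac:(nlia) ltac:(nlia) g1 g2 hw.
  exists a, b; split => //; nlia.
- move=> hc; have [k [kn -> -> _]] := cross_struct hc; nlia.
- move=> hc; have [k [kn -> -> P]] := cross_struct hc; split; first by [].
  move=> i j hi hj hjn; case/andP: P => /andP [a b] c.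
  rewrite ltNge; apply/negP => hle.
  apply: (@C2 k i j) a b c _; [nlia|nlia|nlia|].
  apply: fle_lt hle; nlia.
Qed.

End L.

Theorem lemma7 (d : Order.disp_t) (T : orderType d) (e : rel T)
  (s t : T) (p : seq T) :
  simple_graph e -> X_property e -> s < t -> shortest_path e s t p ->
  ((righti p s < lefti p s)%N <-> has_crossing p s) /\
  (has_crossing p s ->
     righti p s = (lefti p s).-1 /\
     forall i j, (i < righti p s)%N -> (lefti p s < j)%N -> (j < size p)%N ->
       nth s p i < nth s p j).
Proof. move=> H1 H2 H3 H4; exact: (@main d T e s t p H1 H2 H3 H4). Qed.
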